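(* Let $H=(V,E)$ be an unweighted hypergraph on $n$ vertices, and consider the algorithm Estimation$(H)$: compute a number $k>0$ with $\gamma_H(e)\ge k$ for all $e\in E$; set $H_0=H$ and $i=1$; while $H_{i-1}$ has edges, let $F_i=\textsc{WeakEdges}(H_{i-1},2^ik)$, set $\gamma'(e)=2^{i-1}k$ for every $e\in F_i$, set $H_i=H_{i-1}-F_i$ and increase $i$ by one. Here $\textsc{WeakEdges}(G,t)$ returns a set of edges of $G$ containing all $t$-weak edges of $G$. Let $c>0$. If $\textsc{WeakEdges}(G,t)$ outputs a $ct$-light set of edges of $G$ for every input $G,t$, then the output $\gamma'$ of Estimation$(H)$ satisfies $\sum_{e\in E}\frac{1}{\gamma'(e)}\le 2c(n-1)$.
   Context: A hypergraph $H=(V,E)$ has edges that are subsets of $V$. For $U\subseteq V$, $H[U]=(U,\{e\in E:e\subseteq U\})$; for $A\subseteq V$, $\delta_H(A)$ is the set of edges meeting both $A$ and $V\setminus A$; $\lambda(H)=\min_{\emptyset\subsetneq A\subsetneq V}|\delta_H(A)|$. The strength of $e$ is $\gamma_H(e)=\max_{e\subseteq U\subseteq V}\lambda(H[U])$; an edge is $t$-weak in $G$ if its strength in $G$ is less than $t$. $\kappa(G)$ is the number of connected components of $G$. A set $E'\subseteq E(G)$ is $\ell$-light if $|E'|\le\ell(\kappa(G-E')-\kappa(G))$. *)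

(* Defs.v *)
From HB Require Import structures.
From mathcomp Require Import all_boot all_order all_algebra.
Set Implicit Arguments. Unset Strict Implicit. Unset Printing Implicit Defensive.
Import Order.TTheory GRing.Theory Num.Theory.
Local Open Scope ring_scope.

(* A hypergraph on the finite vertex type V: edges are indexed by the finite
   type E, edge e has vertex set ends e.  A (sub)hypergraph with the same
   vertex set is given by its edge set G : {set E}. *)
Section Hyper.
Variables (V E : finType) (ends : E -> {set V}).

Definition induced_edges (G : {set E}) (U : {set V}) : {set E} :=
  [set e in G | ends e \subset U].

Definition cut (G : {set E}) (A : {set V}) : {set E} :=
  [set e in G | (ends e :&: A != set0) && (ends e :\: A != set0)].

(* lambda(G[U]) >= t   (min over all A with  emptyset < A < U;
   empty minimum = +infinity) *)
Definition lambda_ge (R : numDomainType) (G : {set E}) (U : {set V}) (t : R) : Prop :=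
  forall A : {set V}, set0 \proper A -> A \proper U ->
    t <= (#|cut (induced_edges G U) A|)%:R.

(* gamma_G(e) >= t  (max over U containing e of lambda(G[U])) *)
Definition strength_ge (R : numDomainType) (G : {set E}) (e : E) (t : R) : Prop :=
  exists U : {set V}, ends e \subset U /\ lambda_ge G U t.

Definition weak (R : numDomainType) (G : {set E}) (t : R) (e : E) : Prop :=
  e \in G /\ ~ strength_ge G e t.

Definition adj (G : {set E}) : rel V :=
  fun x y => [exists e in G, (x \in ends e) && (y \in ends e)].

Definition kappa (G : {set E}) : nat := n_comp (adj G) predT.

Definition light (R : numDomainType) (l : R) (G Es : {set E}) : Prop :=
  Es \subset G /\
  (#|Es|%:R <= l * ((kappa (G :\: Es))%:R - (kappa G)%:R)).

(* The edge sets H_i of the algorithm Estimation, given the WeakEdges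
   procedure WE : (graph, threshold) -> edge set:
   H_0 = H,  H_i = H_{i-1} - F_i,  F_i = WE (H_{i-1}) (2^i k). *)
Fixpoint est_run (R : numDomainType) (WE : {set E} -> R -> {set E}) (k : R)
    (i : nat) : {set E} :=
  match i with
  | 0 => [set: E]
  | i'.+1 => est_run WE k i' :\: WE (est_run WE k i') (2%:R ^+ i * k)
  end.

(* F_i for i >= 1 *)
Definition est_F (R : numDomainType) (WE : {set E} -> R -> {set E}) (k : R)
    (i : nat) : {set E} :=
  WE (est_run WE k i.-1) (2%:R ^+ i * k).

End Hyper.

(* Main.v *)
Require Import Defs.
From HB Require Import structures.
From mathcomp Require Import all_boot all_order all_algebra.
From mathcomp Require Import ring.
Import Order.TTheory GRing.Theory Num.Theory.
Local Open Scope ring_scope.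

Lemma kappa_le (V E : finType) (ends : E -> {set V}) (G : {set E}) :
  (kappa ends G <= #|V|)%N.
Proof. exact: max_card. Qed.

Lemma kappa_gt0 (V E : finType) (ends : E -> {set V}) (G : {set E}) (x : V) :
  (0 < kappa ends G)%N.
Proof.
have sym : connect_sym (adj ends G).
  apply: sym_connect_sym => a b; apply/existsP/existsP => -[f /andP[fG /andP[h1 h2]]];
  by exists f; rewrite fG h1 h2.
apply/card_gt0P; exists (fingraph.root (adj ends G) x).
by rewrite inE /= andbT roots_root.
Qed.

Theorem lemma3p2 (R : realFieldType) (V E : finType) (ends : E -> {set V})
    (c k : R) (WE : {set E} -> R -> {set E}) (gamma' : E -> R) (m : nat) :
  0 < c ->
  0 < k ->
  (* k is a lower bound on all edge strengths of H *)
  (forall e : E, strength_ge ends [set: E] e k) ->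
  (* WeakEdges(G,t) returns a set of edges of G containing all t-weak edges *)
  (forall (G : {set E}) (t : R), WE G t \subset G) ->
  (forall (G : {set E}) (t : R) (e : E), weak ends G t e -> e \in WE G t) ->
  (* ... and this set is (c t)-light in G *)
  (forall (G : {set E}) (t : R), light ends (c * t) G (WE G t)) ->
  (* the while loop terminates: H_m has no edges *)
  est_run WE k m = set0 ->
  (* gamma' is the output: gamma'(e) = 2^(i-1) k for every e in F_i *)
  (forall (i : nat) (e : E), (1 <= i)%N -> e \in est_F WE k i ->
     gamma' e = 2%:R ^+ i.-1 * k) ->
  \sum_(e : E) (gamma' e)^-1 <= 2%:R * c * (#|V| - 1)%:R.
Proof.
move=> c0 k0 _ WEsub _ WElight Hm Hg.
set H := est_run WE k.
have key : forall j, \sum_(e in ~: H j) (gamma' e)^-1 <=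
    2%:R * c * ((kappa ends (H j))%:R - (kappa ends (H 0%N))%:R).
  elim=> [|j IH].
    rewrite subrr mulr0.
    have -> : ~: H 0%N = set0 by rewrite /H /= setCT.
    by rewrite big_set0.
  have HS : H j.+1 = H j :\: WE (H j) (2%:R ^+ j.+1 * k) by [].
  set F := WE (H j) (2%:R ^+ j.+1 * k) in HS.
  have eqS : ~: H j.+1 =i [predU (~: H j) & F].
    move=> e; rewrite HS !inE negb_and negbK orbC.
    by case eF: (e \in F) => //=; move: (subsetP (WEsub (H j) _) e eF) => ->.
  rewrite (eq_bigl _ _ eqS) bigU /=; last first.
    apply/pred0P => e /=; rewrite !inE.
    case eF: (e \in F) => //; rewrite ?andbF // (subsetP (WEsub (H j) _) e eF) //=.
    idtac.
  have eF : \sum_(e in F) (gamma' e)^-1 = \sum_(e in F) (2%:R ^+ j * k)^-1.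
    by apply: eq_bigr => e eF; rewrite (Hg j.+1 e).
  rewrite eF sumr_const.
  have [_ L] := WElight (H j) (2%:R ^+ j.+1 * k).
  rewrite -HS -/F in L.
  set d := (kappa ends (H j.+1))%:R - (kappa ends (H j))%:R in L.
  have pos : 0 < 2%:R ^+ j * k :> R by rewrite mulr_gt0 // exprn_gt0.
  have step : (#|F|%:R : R) * (2%:R ^+ j * k)^-1 <= 2%:R * c * d.
    rewrite ler_pdivrMr //.
    apply: (le_trans L); rewrite exprS; rewrite le_eqVlt; apply/orP; left; apply/eqP.
    by rewrite /d; ring.
  have step' : (2%:R ^+ j * k)^-1 *+ #|F| <= 2%:R * c * d.
    by rewrite -[X in X <= _]mulr_natl.
  apply: le_trans (lerD IH step') _.
  rewrite le_eqVlt; apply/orP; left; apply/eqP.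
  by rewrite /d; ring.
have := key m; rewrite /H Hm setC0.
have -> : \sum_(e in [set: E]) (gamma' e)^-1 = \sum_e (gamma' e)^-1.
  by apply: eq_bigl => e; rewrite inE.
move/le_trans; apply; apply: ler_wpM2l.
  by rewrite mulr_ge0 // ltW.
case: (pickP (@predT V)) => [x _|V0].
  have h1 := @kappa_gt0 _ _ ends (est_run WE k 0%N) x.
  have h2 := @kappa_le _ _ ends (set0 : {set E}).
  rewrite natrB ?card_gt0; last by apply/card_gt0P; exists x.
  by rewrite lerB // ?ler_nat // ler1n.
have cV : #|V| = 0%N by apply: eq_card0.
have h0 : (kappa ends (set0 : {set E}) <= 0)%N.
  by rewrite -cV; exact: kappa_le.
move: h0; rewrite leqn0 => /eqP ->.
by rewrite cV /= sub0r oppr_le0 ler0n.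
Qed.
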